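(* Let $\mathcal{H}\subseteq\mathcal{Y}^{\mathcal{X}}$ be a hypothesis class such that (i) every $h\in\mathcal{H}$ satisfies $|\mathrm{im}(h)|\le 2$, and (ii) the map $h\mapsto \mathrm{im}(h)$ is injective on $\mathcal{H}$ (i.e., $\mathrm{im}(h)\neq\mathrm{im}(h')$ whenever $h\ne h'$ in $\mathcal{H}$). Then $\mathcal{H}$ is learnable in both the PAC model and the transductive model.
   Context: $\mathrm{im}(h)=\{h(x):x\in\mathcal{X}\}$. Losses are 0-1 (realizable multiclass classification). For $S=(x_i)_{i\in[n]}\in\mathcal{X}^n$ and $h^*\in\mathcal{H}$, the transductive error of a learner $\mathcal{A}$ (a map from finite labeled sequences to functions $\mathcal{X}\to\mathcal{Y}$) is $\frac1n\sum_{i\in[n]}[\mathcal{A}(S_{-i},h^* )(x_i)\ne h^*(x_i)]$, where $\mathcal{A}(S_{-i},h^* )$ is its output on $((x_j,h^*(x_j)))_{j\ne i}$. $\mathcal{H}$ is transductively learnable if some learner $\mathcal{A}$ and $m:(0,1)\to\mathbb{N}$ satisfy: for all $\epsilon\in(0,1)$, $h^*\in\mathcal{H}$, and $S$ with $|S|\ge m(\epsilon)$, the transductive error is at most $\epsilon$. $\mathcal{H}$ is PAC learnable if some learner $\mathcal{A}$ and $m:(0,1)^2\to\mathbb{N}$ satisfy: for every distribution $\mathcal{D}$ on $\mathcal{X}\times\mathcal{Y}$ realizable by some $h\in\mathcal{H}$ (i.e., $\Pr_{(x,y)\sim\mathcal{D}}[h(x)\ne y]=0$) and all $\epsilon,\delta\in(0,1)$,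 if $S\sim\mathcal{D}^n$ with $n\ge m(\epsilon,\delta)$ then $\Pr_{(x,y)\sim\mathcal{D}}[\mathcal{A}(S)(x)\ne y]\le\epsilon$ with probability at least $1-\delta$. *)

(* Defs.v *)
From HB Require Import structures.
From mathcomp Require Import all_boot all_order all_algebra.
From mathcomp Require Import all_classical all_reals all_analysis.
Set Implicit Arguments. Unset Strict Implicit. Unset Printing Implicit Defensive.
Import Order.TTheory GRing.Theory Num.Theory.
Local Open Scope classical_set_scope.
Local Open Scope ring_scope.

Definition learner (X Y : Type) := seq (X * Y) -> X -> Y.

Definition im_card_le2 (X Y : Type) (h : X -> Y) : Prop :=
  (range h #<= `I_2)%card.

Definition labeled_without (X Y : Type) (n : nat) (S : n.-tuple X) (i : nat)
    (h : X -> Y) : seq (X * Y) :=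
  [seq (x, h x) | x <- take i S ++ drop i.+1 S].

Definition trans_error (R : realType) (X : Type) (Y : eqType) (A : learner X Y)
    (n : nat) (S : n.-tuple X) (h : X -> Y) : R :=
  (n%:R)^-1 * \sum_(i < n)
     (A (labeled_without S i h) (tnth S i) != h (tnth S i))%:R.

Definition transductively_learnable (R : realType) (X : Type) (Y : eqType)
    (H : set (X -> Y)) : Prop :=
  exists (A : learner X Y) (m : R -> nat),
    forall eps : R, 0 < eps < 1 ->
    forall h, H h ->
    forall n, (m eps <= n)%N -> forall S : n.-tuple X,
      @trans_error R X Y A n S h <= eps.

(* Q is the i.i.d. law D^n on n-tuples: it agrees with the product measure on
   all measurable rectangles (which determines it uniquely). *)
Definition iid_law (R : realType) d (T : measurableType d) (n : nat)
    (D : probability T R) (Q : probability (n.-tuple T) R) : Prop :=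
  forall B : 'I_n -> set T, (forall i, measurable (B i)) ->
    Q [set s | forall i, B i (tnth s i)] = (\prod_(i < n) D (B i))%E.

(* Pr_{(x,y)~D}[f x <> y] <= eps, measured by outer measure:
   the error set is covered by a measurable set of D-measure <= eps. *)
Definition risk_le (R : realType) d1 d2 (X : measurableType d1)
    (Y : measurableType d2) (D : probability (X * Y)%type R) (f : X -> Y)
    (eps : R) : Prop :=
  exists2 E : set (X * Y), measurable E &
    [set p | f p.1 != p.2] `<=` E /\ (D E <= eps%:E)%E.

Definition realizable_by (R : realType) d1 d2 (X : measurableType d1)
    (Y : measurableType d2) (D : probability (X * Y)%type R) (h : X -> Y) :=
  D.-negligible [set p | h p.1 != p.2].

(* "with probability at least 1 - delta" over S ~ D^n, via inner measure:
   the good event contains a measurable set of Q-measure >= 1 - delta. *)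
Definition PAC_learnable (R : realType) d1 d2 (X : measurableType d1)
    (Y : measurableType d2) (H : set (X -> Y)) : Prop :=
  exists (A : learner X Y) (m : R -> R -> nat),
    forall (D : probability (X * Y)%type R),
    (exists2 h, H h & realizable_by D h) ->
    forall eps delta : R, 0 < eps < 1 -> 0 < delta < 1 ->
    forall n, (m eps delta <= n)%N ->
    forall Q : probability (n.-tuple (X * Y)%type) R, iid_law D Q ->
    exists2 G : set (n.-tuple (X * Y)%type), measurable G &
      G `<=` [set S | risk_le D (A (tval S)) eps] /\
      ((1 - delta)%:E <= Q G)%E.

(* Main.v *)
Require Import Defs.
From HB Require Import structures.
From mathcomp Require Import all_boot all_order all_algebra.
From mathcomp Require Import all_classical all_reals all_analysis.
From mathcomp Require Import zify.
Local Open Scope classical_set_scope.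
Set Implicit Arguments. Unset Strict Implicit.
From mathcomp Require Import ring lra.
Import Order.TTheory GRing.Theory Num.Theory.
Lemma pig3 (X Y : Type) (h : X -> Y) : im_card_le2 h ->
  forall u v w, range h u -> range h v -> range h w -> u = v \/ v = w \/ u = w.
Proof.
move=> /pcard_leP [f] u v w ru rv rw.
have fS : forall a, range h a -> (f a < 2)%N by move=> a ra; have := @funS _ _ _ _ f a ra; done.
have fu := fS _ ru; have fv := fS _ rv; have fw := fS _ rw.
have fI : forall a b, range h a -> range h b -> f a = f b -> a = b.
  by move=> a b ra rb; apply: inj; apply: mem_set.
rewrite /= in fu fv fw.
have [e|ne1] := eqVneq (f u) (f v); first by left; apply: fI.
have [e|ne2] := eqVneq (f v) (f w); first by right; left; apply: fI.
right; right; apply: fI => //.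
move: fu fv fw ne1 ne2; case: (f u) => [|[|]]; case: (f v) => [|[|]]; case: (f w) => [|[|]] //.
Qed.
Lemma mem_skip (X : eqType) (x0 : X) (s : seq X) (i j : nat) :
  (j < size s)%N -> j != i -> nth x0 s j \in take i s ++ drop i.+1 s.
Proof.
move=> js ji; rewrite mem_cat; case: (ltnP j i) => hji.
  by rewrite -(nth_take x0 hji) mem_nth // size_take; case: ifP => _; lia.
have hij : (i < j)%N by rewrite ltn_neqAle eq_sym ji hji.
have -> : j = (i.+1 + (j - i.+1))%N by lia.
by rewrite -nth_drop mem_nth ?orbT // size_drop; lia.
Qed.
Section Lrn.
Variables (X : eqType) (Y : pointedType) (H : set (X -> Y)).

Definition labels (s : seq (X * Y)) : set Y := [set y | exists2 p, p \in s & p.2 = y].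
Definition cons_with (s : seq (X * Y)) (h : X -> Y) := forall p, p \in s -> h p.1 = p.2.
Definition goodh s h := H h /\ cons_with s h /\ range h `<=` labels s.

Definition lrn : learner X Y := fun s =>
  match pselect (exists h, goodh s h) with
  | left e => proj1_sig (cid e)
  | right _ => fun _ => head point (map snd s)
  end.

Lemma L1 s a : s != [::] -> (forall p, p \in s -> p.2 = a) -> forall x, lrn s x = a.
Proof.
move=> sn sa x; rewrite /lrn; case: pselect => [e|ne].
  case: cid => h /= [_ [_ hr]].
  have [p ps <-] := hr (h x) (ex_intro2 _ _ x I erefl).
  exact: sa.
by clear ne; case: s sn sa => [|p s] //= _ sa; apply: sa; rewrite inE eqxx.
Qed.

Lemma L2 s hs : (forall h h', H h -> H h' -> range h = range h' -> h = h') ->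
  H hs -> cons_with s hs -> range hs `<=` labels s -> lrn s = hs.
Proof.
move=> Hinj Hh hc hr; rewrite /lrn; case: pselect => [e|ne]; last first.
  by exfalso; apply: ne; exists hs.
case: cid => h /= [Hh' [hc' hr']].
apply: Hinj => //; apply/seteqP; split.
  move=> y /hr' [p ps <-]; rewrite -hc //; by exists p.1.
move=> y /hr [p ps <-]; rewrite -hc' //; by exists p.1.
Qed.


Hypothesis H2 : forall h, H h -> im_card_le2 h.
Hypothesis Hinj : forall h h', H h -> H h' -> range h = range h' -> h = h'.

Lemma err_unique n (S : n.-tuple X) (i : 'I_n) h : H h ->
  lrn (labeled_without S i h) (tnth S i) != h (tnth S i) ->
  forall j : 'I_n, j != i -> h (tnth S j) != h (tnth S i).
Proof.
move=> Hh err j ji; apply/negP => /eqP e; move/negP: err; apply; apply/eqP.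
set s := labeled_without S i h; set y := h (tnth S i).
have mj : (tnth S j, h (tnth S j)) \in s.
  apply: map_f; rewrite (tnth_nth (tnth S j)); apply: mem_skip => //.
  by rewrite size_tuple.
have cs : cons_with s h by move=> p /mapP [x _ ->].
case: (pselect (range h `<=` labels s)) => [rs | nrs].
  by rewrite (L2 Hinj Hh cs rs).
have [c rc nc] : exists2 c, range h c & ~ labels s c.
  apply: contrapT => hc; apply: nrs => c rc.
  by apply: contrapT => nc; apply: hc; exists c.
apply: L1; first by apply/eqP => s0; rewrite s0 in mj.
move=> p ps; rewrite -(cs p ps).
have yl : labels s y by exists (tnth S j, h (tnth S j)).
have pl : labels s (h p.1) by exists p => //; rewrite (cs p ps).
have := pig3 (H2 Hh) (ex_intro2 _ _ p.1 I erefl) (ex_intro2 _ _ (tnth S i) I erefl) rc.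
by case=> [//|[e2|e2]]; exfalso; apply: nc; rewrite -e2.
Qed.


Import Order.TTheory GRing.Theory Num.Theory.
Local Open Scope ring_scope.

Lemma trans_learn (R : realType) : transductively_learnable R H.
Proof.
exists lrn, (fun eps : R => (Num.truncn (2 / eps)).+1).
move=> eps /andP[e0 e1] h Hh n hn S.
rewrite /trans_error.
set A := [set i : 'I_n | [forall j : 'I_n, (j != i) ==> (h (tnth S j) != h (tnth S i))]].
have uA : forall a b, a \in A -> b != a -> h (tnth S b) != h (tnth S a).
  by move=> a b; rewrite inE => /forallP /(_ b) /implyP.
have cardA : (#|A| <= 2)%N.
  rewrite leqNgt; apply/negP => /card_gt2P [a [b [c [[aA bA cA] [ab bc ca]]]]].
  have := pig3 (H2 Hh) (ex_intro2 _ _ (tnth S a) I erefl)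
     (ex_intro2 _ _ (tnth S b) I erefl) (ex_intro2 _ _ (tnth S c) I erefl).
  case=> [/eqP|[/eqP|/eqP]]; apply/negP; rewrite eq_sym.
  - by apply: uA => //; rewrite eq_sym.
  - by apply: uA => //; rewrite eq_sym.
  - by apply: uA.
have sumle : (\sum_(i < n) ((lrn (labeled_without S i h) (tnth S i) != h (tnth S i)) : nat) <= #|A|)%N.
  rewrite -sum1_card [X in (_ <= X)%N]big_mkcond /=; apply: leq_sum => i _.
  case: ifP => iA; first exact: leq_b1.
  case: eqP => //= /eqP err; exfalso; move/negbT: iA; apply/negP; rewrite negbK inE.
  apply/forallP => j; apply/implyP => ji.
  exact: (err_unique Hh err ji).
rewrite -natr_sum.
set k := (\sum_(i < n) _)%N in sumle *.
have k2 : (k%:R : R) <= 2 by rewrite (ler_nat R k 2); exact: leq_trans sumle cardA.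
have nlt : 2 / eps < n%:R.
  apply: lt_le_trans (truncnS_gt _) _; rewrite ler_nat; exact: hn.
have n0 : (0 : R) < n%:R by apply: le_lt_trans nlt; apply: divr_ge0 => //; exact: ltW.
have h2 : 2 < eps * n%:R by move: nlt; rewrite ltr_pdivrMr // mulrC.
rewrite mulrC ler_pdivrMr //.
apply: le_trans k2 _; exact: ltW.
Qed.


Lemma good_sample n (S : n.-tuple (X * Y)) (hs : X -> Y) (N : set (X * Y)) :
  H hs -> (0 < n)%N -> [set p | hs p.1 != p.2] `<=` N ->
  (forall i, ~ N (tnth S i)) ->
  lrn S = hs \/ exists a' c, [/\ range hs c, c != a',
     (forall x, lrn S x = a') & forall i, (tnth S i).2 = a'].
Proof.
move=> Hh n0 Nsub nN.
have cs : cons_with S hs.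
  move=> p /tnthP [i ->]; apply/eqP; apply: contrapT => /negP ne.
  by apply: (nN i); apply: Nsub.
case: (pselect (range hs `<=` labels S)) => [rs | nrs].
  by left; apply: L2.
right.
have [c rc nc] : exists2 c, range hs c & ~ labels S c.
  apply: contrapT => hc; apply: nrs => c rc.
  by apply: contrapT => nc; apply: hc; exists c.
pose p0 := tnth S (Ordinal n0).
have p0S : p0 \in tval S by apply: mem_tnth.
have allp : forall p, p \in tval S -> p.2 = p0.2.
  move=> p pS.
  have := pig3 (H2 Hh) (ex_intro2 _ _ p.1 I erefl) (ex_intro2 _ _ p0.1 I erefl) rc.
  rewrite (cs p pS) (cs p0 p0S).
  case=> [//|[e|e]]; exfalso; apply: nc; rewrite -e.
    by exists p0.
  by exists p.
exists p0.2, c; split => //.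
- by apply/eqP => e; apply: nc; exists p0; rewrite ?e.
- apply: L1 => //; by apply/eqP => e; rewrite e in p0S.
- by move=> i; apply: allp; apply: mem_tnth.
Qed.
End Lrn.

Section Pow.
Local Open Scope ring_scope.
Lemma bern (R : realType) (e : R) n : 0 <= e <= 1 ->
  (1 - e) ^+ n * (1 + n%:R * e) <= 1.
Proof.
move=> /andP[e0 e1]; elim: n => [|n IH]; first by rewrite expr0 mul0r addr0 mul1r.
set q := (1 - e) ^+ n.
have q0 : 0 <= q by apply: exprn_ge0; lra.
have eq : (1 - e) ^+ n.+1 * (1 + n.+1%:R * e) = q * (1 + n%:R * e) - q * (n.+1%:R * (e * e)).
  rewrite exprS -/q -natr1; ring.
rewrite eq; have hy : 0 <= q * (n.+1%:R * (e * e)) by apply: mulr_ge0 => //; apply: mulr_ge0 => //; apply: mulr_ge0.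
rewrite lerBlDr; apply: le_trans IH _; rewrite lerDl //.
Qed.

Lemma pow_bound (R : realType) (eps delta : R) n : 0 < eps < 1 -> 0 < delta ->
  (Num.truncn (2 / (eps * delta)) < n)%N -> (1 - eps) ^+ n <= delta / 2.
Proof.
move=> /andP[e0 e1] d0 hn.
have nlt : 2 / (eps * delta) < n%:R.
  apply: lt_le_trans (truncnS_gt _) _; rewrite ler_nat; exact: hn.
have ed0 : 0 < eps * delta by apply: mulr_gt0.
have h2 : 2 < n%:R * (eps * delta) by move: nlt; rewrite ltr_pdivrMr.
have b := bern n (_ : 0 <= eps <= 1).
have {b} b : (1 - eps) ^+ n * (1 + n%:R * eps) <= 1 by apply: b; lra.
set q := (1 - eps) ^+ n in b *.
have q0 : 0 <= q by apply: exprn_ge0; lra.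
set N := n%:R in h2 b.
have h3 : 2 < (N * eps) * delta by rewrite -mulrA.
have : q * ((N * eps) * delta) <= delta by have := b; nra.
nra.
Qed.
End Pow.

Lemma bigsetI_in (T : Type) (I : eqType) (r : seq I) (F : I -> set T) x :
  (\big[setI/setT]_(i <- r) F i) x <-> (forall i, i \in r -> F i x).
Proof.
elim: r => [|i r IH]; first by rewrite big_nil; split.
rewrite big_cons; split.
  move=> [Fi /IH Fr] j; rewrite inE => /orP [/eqP ->|jr] //; exact: Fr.
move=> hf; split; first by apply: hf; rewrite inE eqxx.
by apply/IH => j jr; apply: hf; rewrite inE jr orbT.
Qed.

Lemma rect_meas d (T : measurableType d) n (B : 'I_n -> set T) :
  (forall i, measurable (B i)) ->
  measurable [set S : n.-tuple T | forall i, B i (tnth S i)].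
Proof.
move=> mB.
have -> : [set S : n.-tuple T | forall i, B i (tnth S i)] =
    \big[setI/setT]_(i <- index_enum 'I_n) (setT `&` (fun S => tnth S i) @^-1` B i).
  apply/seteqP; split => S /=.
    by move=> hS; apply/bigsetI_in => i _; split.
  move/bigsetI_in => hS i; have [] := hS i _ => //.
  by rewrite mem_index_enum.
apply: bigsetI_measurable => i _; exact: measurable_tnth.
Qed.

Section PAC.
Context (R : realType) d1 d2 (X : measurableType d1) (Y : measurableType d2).
Variable (D : probability (X * Y)%type R).

Lemma sep (hs : X -> Y) (N : set (X * Y)) : im_card_le2 hs ->
  measurable N -> D N = 0%E -> [set p | hs p.1 != p.2] `<=` N ->
  forall a b, range hs a -> range hs b -> a != b ->
  exists2 T : set Y, measurable T & T a /\ ~ T b.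
Proof.
move=> h2 mN DN Nsub a b ra rb ab.
apply: contrapT => nT.
have ab' : forall T : set Y, measurable T -> T a -> T b.
  move=> T mT Ta; apply: contrapT => nTb; apply: nT; exists T => //.
have ba' : forall T : set Y, measurable T -> T b -> T a.
  move=> T mT Tb; apply: contrapT => nTa.
  have := ab' (~` T) (measurableC mT) nTa; exact.
have NT : N = setT.
  apply/seteqP; split => // [[x y]] _.
  apply: contrapT => nN.
  have ey : hs x = y.
    by apply/eqP; apply: contrapT => /negP ne; apply: nN; apply: Nsub.
  have mS := measurable_xsection x mN.
  have := pig3 h2 (ex_intro2 _ _ x I erefl) ra rb.
  case=> [e|[e|e]].
  - have Sb : xsection N x b by rewrite /xsection /= inE; apply: Nsub => /=; rewrite e.
    have := ba' _ mS Sb; rewrite /xsection /= inE -e ey; exact: nN.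
  - by rewrite e eqxx in ab.
  - have Sa : xsection N x a by rewrite /xsection /= inE; apply: Nsub => /=; rewrite e eq_sym.
    have := ab' _ mS Sa; rewrite /xsection /= inE -e ey; exact: nN.
move: DN; rewrite NT probability_setT => /eqP; rewrite eqe => /eqP.
by move=> /eqP; rewrite oner_eq0.
Qed.




Lemma bad_meas n (U : set (X * Y)) (P : Prop) : measurable U ->
  measurable [set S : n.-tuple (X * Y) | P /\ forall i, U (tnth S i)].
Proof.
move=> mU; case: (pselect P) => p.
  have -> : [set S : n.-tuple (X * Y) | P /\ forall i, U (tnth S i)] =
      [set S | forall i, (fun _ => U) i (tnth S i)].
    by apply/seteqP; split => S /= => [[]|] //.
  exact: (@rect_meas _ _ n (fun _ => U)).
have -> : [set S : n.-tuple (X * Y) | P /\ forall i, U (tnth S i)] = set0.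
  by apply/seteqP; split => S // [].
exact: measurable0.
Qed.

Lemma bad_Q n (Q : probability (n.-tuple (X * Y)%type) R) (U V : set (X * Y))
  (eps delta : R) : iid_law D Q -> measurable U -> measurable V -> U `&` V = set0 ->
  (0 < eps < 1)%R -> (0 < delta)%R -> (Num.truncn (2 / (eps * delta)) < n)%N ->
  (Q [set S | (eps%:E < D V)%E /\ forall i, U (tnth S i)] <= (delta / 2)%:E)%E.
Proof.
move=> iid mU mV UV /andP[e0 e1] d0 hn.
case: (pselect (eps%:E < D V)%E) => hV; last first.
  have -> : [set S : n.-tuple (X * Y) | (eps%:E < D V)%E /\ forall i, U (tnth S i)] = set0.
    by apply/seteqP; split => S // [].
  by rewrite measure0 lee_fin; apply: divr_ge0 => //; apply: ltW.
have -> : [set S : n.-tuple (X * Y) | (eps%:E < D V)%E /\ forall i, U (tnth S i)] =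
      [set S | forall i, (fun _ => U) i (tnth S i)].
  by apply/seteqP; split => S /= => [[]|] //.
rewrite (iid (fun _ => U)) //.
have fU := fin_num_measure D U mU.
have fV := fin_num_measure D V mV.
have hle := probability_le1 D (measurableU _ _ mU mV).
rewrite measureU // in hle.
rewrite -(fineK fU) -(fineK fV) -EFinD lee_fin in hle.
rewrite -(fineK fV) lte_fin in hV.
rewrite -(fineK fU) prodEFin prodr_const card_ord lee_fin.
have u0 : (0 <= fine (D U))%R by apply: fine_ge0; apply: measure_ge0.
apply: (le_trans _ (pow_bound (n := n) (eps := eps) _ d0 hn)); last by rewrite e0 e1.
apply: lerXn2r; rewrite ?nnegrE //.
  by rewrite subr_ge0 ltW.
rewrite lerBrDr addrC; apply: le_trans hle; rewrite addrC lerD2l ltW //.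
Qed.


Lemma const_risk (hs : X -> Y) (N : set (X * Y)) (T : set Y) (a b : Y) (eps : R) :
  measurable N -> D N = 0%E -> [set p | hs p.1 != p.2] `<=` N ->
  measurable T -> ~ T b -> (forall x, hs x = a \/ hs x = b) ->
  (D ((setT `*` ~` T) `\` N) <= eps%:E)%E ->
  risk_le D (fun _ => a) eps.
Proof.
move=> mN DN Nsub mT nTb hab small.
have mV : measurable ((setT `*` ~` T) `\` N).
  by apply: measurableD => //; apply: measurableX => //; apply: measurableC.
exists (N `|` (setT `*` ~` T) `\` N); first exact: measurableU.
split.
  move=> [x y] /= ne; case: (pselect (N (x, y))) => hN; [by left | right].
  have ey : hs x = y.
    by apply/eqP; apply: contrapT => /negP nn; apply: hN; apply: Nsub.
  split => //; split => //=.
  case: (hab x) => e.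
    by exfalso; move: ne; rewrite -ey e eqxx.
  by rewrite -ey e.
apply: le_trans (measureU2 _ mN mV) _.
by rewrite [X in (X + _)%E]DN add0e.

Qed.
End PAC.


Theorem proposition1 (R : realType) (d1 d2 : measure_display)
    (X : measurableType d1) (Y : measurableType d2) (H : set (X -> Y)) :
  (forall h, H h -> im_card_le2 h) ->
  (forall h h', H h -> H h' -> range h = range h' -> h = h') ->
  PAC_learnable R H /\ transductively_learnable R H.
Proof.
move=> H2 Hinj; split; last exact: trans_learn.
exists (lrn H), (fun eps delta => (Num.truncn (2 / (eps * delta))).+1).
move=> D [hs Hh [N [mN DN Nsub]]] eps delta he hd n hn Q iid.
have n0 : (0 < n)%N by apply: leq_trans hn.
have d0 : (0 < delta)%R by case/andP: hd.
have e0 : (0 < eps)%R by case/andP: he.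
pose G0 := [set S : n.-tuple (X * Y) | forall i, (fun _ => ~` N) i (tnth S i)].
have mG0 : measurable G0 by apply: rect_meas => _; apply: measurableC.
have QG0 : Q G0 = 1%E.
  rewrite /G0 (iid (fun _ => ~` N)); last by move=> _; apply: measurableC.
  rewrite big1 // => i _; by rewrite probability_setC // DN sube0.
pose a := hs point.
have ra : range hs a by exists point.
case: (pselect (exists2 b, range hs b & b != a)) => [[b rb ba] | nb]; last first.
  exists G0 => //; split.
    move=> S nN.
    rewrite /=; case: (good_sample H2 Hinj Hh n0 Nsub nN) => [-> | [a' [c [rc ca' lc la']]]].
      by exists N => //; split => //; rewrite DN lee_fin ltW.
    exfalso.
    have ea' : a' = hs (tnth S (Ordinal n0)).1.
      rewrite -(la' (Ordinal n0)); apply/esym/eqP; apply: contrapT => /negP ne.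
      by apply: (nN (Ordinal n0)); apply: Nsub.
    have e1 : c = a by apply: contrapT => ne; apply: nb; exists c => //; apply/eqP.
    have e2 : a' = a.
      apply: contrapT => ne; apply: nb; exists a' => //; last by apply/eqP.
      by rewrite ea'; exists (tnth S (Ordinal n0)).1.
    by move: ca'; rewrite e1 e2 eqxx.
  by rewrite QG0 lee_fin gerBl ltW.
have ab : a != b by rewrite eq_sym.
have [T mT [Ta nTb]] := sep (H2 _ Hh) mN DN Nsub ra rb ab.
have hab : forall x, hs x = a \/ hs x = b.
  move=> x; have := pig3 (H2 _ Hh) (ex_intro2 _ _ x I erefl) ra rb.
  by case=> [->|[e|->]]; [left|move: ab; rewrite e eqxx|right].
pose U1 := (setT `*` T) `\` N.
pose V1 := (setT `*` ~` T) `\` N.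
pose W1 := (setT `*` ~` (~` T)) `\` N.
have mU1 : measurable U1 by apply: measurableD => //; apply: measurableX.
have mV1 : measurable V1.
  by apply: measurableD => //; apply: measurableX => //; apply: measurableC.
have mW1 : measurable W1.
  by apply: measurableD => //; apply: measurableX => //; do 2 apply: measurableC.
have UV : U1 `&` V1 = set0.
  by apply/seteqP; split => // -[x y] [[[_ Ty] _] [[_ nTy] _]].
have VW : V1 `&` W1 = set0.
  by apply/seteqP; split => // -[x y] [[[_ Ty] _] [[_ nTy] _]].
pose B1 := [set S : n.-tuple (X * Y) | (eps%:E < D V1)%E /\ forall i, U1 (tnth S i)].
pose B2 := [set S : n.-tuple (X * Y) | (eps%:E < D W1)%E /\ forall i, V1 (tnth S i)].
have mB1 : measurable B1 by apply: bad_meas.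
have mB2 : measurable B2 by apply: bad_meas.
have QB1 : (Q B1 <= (delta / 2)%:E)%E by apply: bad_Q.
have QB2 : (Q B2 <= (delta / 2)%:E)%E by apply: bad_Q.
have mB : measurable (B1 `|` B2) by apply: measurableU.
pose G := G0 `\` (B1 `|` B2).
have mG : measurable G by apply: measurableD.
exists G => //; split.
  move=> S [nN nB] /=.
  have ey : forall i, hs (tnth S i).1 = (tnth S i).2.
    move=> i; apply/eqP; apply: contrapT => /negP ne.
    by apply: (nN i); apply: Nsub.
  case: (good_sample H2 Hinj Hh n0 Nsub nN) => [-> | [a' [c [rc ca' lc la']]]].
    by exists N => //; split => //; rewrite DN lee_fin ltW.
  have -> : lrn H S = (fun _ => a') by apply: funext.
  have ea' : a' = hs (tnth S (Ordinal n0)).1 by rewrite ey la'.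
  case: (hab (tnth S (Ordinal n0)).1) => e; rewrite -ea' in e; rewrite e.
  - apply: (const_risk mN DN Nsub mT nTb hab).
    rewrite leNgt; apply/negP => hlt; apply: nB; left; split => // i.
    split; last exact: nN.
    by split => //=; rewrite (la' i) e.
  - have hba : forall x, hs x = b \/ hs x = a by move=> x; case: (hab x); [right|left].
    apply: (const_risk mN DN Nsub (measurableC mT) _ hba); first by move=> /(_ Ta).
    rewrite leNgt; apply/negP => hlt; apply: nB; right; split => // i.
    split; last exact: nN.
    by split => //=; rewrite (la' i) e.
have sub : G0 `<=` G `|` (B1 `|` B2).
  move=> S G0S; case: (pselect ((B1 `|` B2) S)) => hB; [by right | by left].
have h1 : (1 <= Q G + (delta / 2)%:E + (delta / 2)%:E)%E.
  rewrite -QG0; apply: le_trans (le_measure Q (mem_set mG0) (mem_set (measurableU _ _ mG mB)) sub) _.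
  apply: le_trans (measureU2 _ mG mB) _.
  rewrite -addeA; apply: leeD => //.
  apply: le_trans (measureU2 _ mB1 mB2) _.
  exact: leeD.
have fG := fin_num_measure Q G mG.
rewrite -(fineK fG) in h1 *.
rewrite -!EFinD lee_fin in h1; rewrite lee_fin.
have : (delta / 2 + delta / 2 = delta)%R by field.
lra.
Qed.
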